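(* Assume $1-4M_0>0$ and set $\Xi:=1-4M_0$, $\lambda_1:=\frac{-1+\sqrt{\Xi}}{2}$, $\lambda_2:=\frac{-1-\sqrt{\Xi}}{2}$. For $x\in\Omega_0$ put $$P(x):=\frac{1}{\sqrt\Xi}\big(\lambda_1\partial_x u_0(x)-M_0+2\rho_0(x)\big),\qquad Q(x):=\frac{1}{\sqrt\Xi}\big(M_0-2\rho_0(x)-\lambda_2\partial_x u_0(x)\big),$$ and for $t\ge 0$, $x\in\Omega_0$, $$D(t,x):=\frac{2\rho_0(x)}{M_0}+\frac{P(x)}{\lambda_1}e^{\lambda_1 t}+\frac{Q(x)}{\lambda_2}e^{\lambda_2 t}$$ (this is the expression of $\partial_x\eta(t,x)$ for a classical solution of the Lagrangian system, as long as it exists). Then there exist $t>0$ and $x\in\Omega_0$ with $D(t,x)\le 0$ if and only if there exists $x\in\Omega_0$ such that $$\partial_x u_0(x)<0,\qquad M_0-2\rho_0(x)<\lambda_1\partial_x u_0(x),$$ and $$2\rho_0(x)\le\big(\lambda_1\partial_x u_0(x)-M_0+2\rho_0(x)\big)^{-\lambda_2/\sqrt\Xi}\big(\lambda_2\partial_x u_0(x)-M_0+2\rho_0(x)\big)^{\lambda_1/\sqrt\Xi}.$$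
   Context: $\Omega_0=(a_0,b_0)$ is a bounded open interval, $\rho_0\in H^2(\Omega_0)$ with $\rho_0>0$ on $\Omega_0$, $u_0\in H^3(\Omega_0)$ (both continuous up to the boundary), and $M_0:=\int_{\Omega_0}\rho_0(x)\,dx>0$. Note $D(0,x)=1$ for all $x$. *)

(* Defs.v *)
From Stdlib Require Import Reals Lra.
Open Scope R_scope.

Definition Xi (M0 : R) : R := 1 - 4 * M0.
Definition lambda1 (M0 : R) : R := (-1 + sqrt (Xi M0)) / 2.
Definition lambda2 (M0 : R) : R := (-1 - sqrt (Xi M0)) / 2.

(* P(x), Q(x); du0 is the derivative of u0, rho0x = rho0(x). *)
Definition Pfun (M0 rho0x du0x : R) : R :=
  / sqrt (Xi M0) * (lambda1 M0 * du0x - M0 + 2 * rho0x).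
Definition Qfun (M0 rho0x du0x : R) : R :=
  / sqrt (Xi M0) * (M0 - 2 * rho0x - lambda2 M0 * du0x).

Definition Dfun (M0 rho0x du0x t : R) : R :=
  2 * rho0x / M0
  + Pfun M0 rho0x du0x / lambda1 M0 * exp (lambda1 M0 * t)
  + Qfun M0 rho0x du0x / lambda2 M0 * exp (lambda2 M0 * t).

(* Main.v *)
Require Import Defs.
From Stdlib Require Import Reals Lra Classical.
From Coquelicot Require Import Coquelicot.
Open Scope R_scope.

Section G.
Variables s r d : R.
Hypothesis Hs0 : 0 < s.
Hypothesis Hs1 : s < 1.
Hypothesis Hr : 0 < r.
Let M := (1 - s*s)/4.
Let l1 := (-1 + s)/2.
Let l2 := (-1 - s)/2.
Let A := l1 * d - M + 2*r.
Let B := l2 * d - M + 2*r.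
Definition f t := 2*r/M + A/(s*l1)*exp(l1*t) - B/(s*l2)*exp(l2*t).
Definition f' t := (A*exp(l1*t) - B*exp(l2*t))/s.

Lemma Mpos : 0 < M. Proof. unfold M; nra. Qed.
Lemma l1neg : l1 < 0. Proof. unfold l1; lra. Qed.
Lemma l2neg : l2 < 0. Proof. unfold l2; lra. Qed.

Lemma f_der t : derivable_pt_lim f t (f' t).
Proof.
  apply is_derive_Reals. unfold f, f'.
  pose proof l1neg; pose proof l2neg.
  auto_derive; auto. field. lra.
Qed.

Lemma f0 : f 0 = 1.
Proof.
  unfold f, A, B, M, l1, l2. rewrite !Rmult_0_r, exp_0.
  field. repeat split; nra.
Qed.

Lemma lower1 t : 0 < t -> ~ (d < 0 /\ 0 < A) -> 0 < f t.
Proof.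
  intros Ht Hn. pose proof Mpos; pose proof l1neg; pose proof l2neg.
  assert (Ea : exp (l2*t) < exp (l1*t)) by (apply exp_increasing; unfold l1,l2; nra).
  assert (Ea1 : exp (l1*t) < 1) by (rewrite <- exp_0; apply exp_increasing; nra).
  assert (Eb0 : 0 < exp (l2*t)) by apply exp_pos.
  assert (0 < 2*r/M) by (apply Rdiv_lt_0_compat; lra).
  destruct (Rle_or_lt A 0) as [HA|HA].
  - set (c1 := A/(s*l1)). set (c2 := - B/(s*l2)).
    assert (E1 : c1 * (s*l1) = A) by (unfold c1; field; lra).
    assert (E2 : c2 * (s*l2) = - B) by (unfold c2; field; lra).
    assert (Hsl : s*l1 < 0) by nra.
    assert (Hsl2 : s*l2 < 0) by nra.
    assert (Hc1 : 0 <= c1) by nra.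
    assert (F : f t = 2*r/M + c1*exp(l1*t) + c2*exp(l2*t)) by (unfold f, c1, c2; field; lra).
    assert (F0 : 2*r/M + c1 + c2 = 1) by (rewrite <- f0; unfold f, c1, c2; rewrite !Rmult_0_r, exp_0; field; lra).
    rewrite F.
    destruct (Rle_or_lt 0 c2) as [Hc2|Hc2]. { nra. }
    destruct (Rle_or_lt 0 (c1+c2)); nra.
  - assert (Hd : 0 <= d) by (destruct (Rle_or_lt 0 d); auto; exfalso; apply Hn; split; lra).
    destruct (MVT_cor2 f f' 0 t Ht (fun c _ => f_der c)) as [c [Hc Hc']].
    rewrite f0 in Hc.
    assert (0 <= f' c).
    { unfold f'. apply Rdiv_le_0_compat; [|lra].
      assert (exp (l2*c) <= exp (l1*c)) by (left; apply exp_increasing; unfold l1,l2; nra).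
      assert (0 < exp (l2*c)) by apply exp_pos.
      assert (B <= A) by (unfold A, B, l1, l2; nra).
      nra. }
    nra.
Qed.

Section Main.
Hypothesis Hd : d < 0.
Hypothesis HA : 0 < A.
Lemma BA : A < B. Proof. unfold A, B, l1, l2. nra. Qed.
Definition ts := ln (B/A) / s.
Lemma ts_pos : 0 < ts.
Proof.
  pose proof BA. unfold ts. apply Rdiv_lt_0_compat; auto.
  rewrite <- ln_1. apply ln_increasing; [lra|].
  apply (Rmult_lt_reg_r A); auto. unfold Rdiv. rewrite Rmult_assoc, Rinv_l; lra.
Qed.
Lemma exp_sts : exp (s*ts) = B/A.
Proof.
  pose proof BA. unfold ts. replace (s * (ln (B/A)/s)) with (ln (B/A)) by (field; lra).
  apply exp_ln. apply Rdiv_lt_0_compat; lra.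
Qed.
Lemma f'_eq c : f' c = exp (l2*c) * (A*exp(s*c) - B) / s.
Proof.
  unfold f'. replace (l1*c) with (l2*c + s*c) by (unfold l1, l2; lra).
  rewrite exp_plus. field. lra.
Qed.
Lemma fmin t : f ts <= f t.
Proof.
  pose proof BA.
  assert (0 < exp (l2*t)) by apply exp_pos.
  destruct (Rtotal_order t ts) as [Hlt|[->|Hgt]]; [| lra |].
  - destruct (MVT_cor2 f f' t ts Hlt (fun c _ => f_der c)) as [c [Hc Hc']].
    assert (f' c <= 0).
    { rewrite f'_eq. assert (0 < exp (l2*c)) by apply exp_pos.
      assert (exp (s*c) < exp (s*ts)) by (apply exp_increasing; nra).
      rewrite exp_sts in H2.
      assert (A * exp (s*c) < B).
      { apply (Rmult_lt_compat_l A) in H2; auto. replace (A*(B/A)) with B in H2 by (field; lra). lra. }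
      unfold Rdiv. assert (0 < /s) by (apply Rinv_0_lt_compat; lra).
      assert (exp (l2*c) * (A*exp(s*c) - B) <= 0) by nra. nra. }
    nra.
  - destruct (MVT_cor2 f f' ts t Hgt (fun c _ => f_der c)) as [c [Hc Hc']].
    assert (0 <= f' c).
    { rewrite f'_eq. assert (0 < exp (l2*c)) by apply exp_pos.
      assert (exp (s*ts) < exp (s*c)) by (apply exp_increasing; nra).
      rewrite exp_sts in H2.
      assert (B < A * exp (s*c)).
      { apply (Rmult_lt_compat_l A) in H2; auto. replace (A*(B/A)) with B in H2 by (field; lra). lra. }
      unfold Rdiv. assert (0 < /s) by (apply Rinv_0_lt_compat; lra).
      assert (0 <= exp (l2*c) * (A*exp(s*c) - B)) by nra. nra. }
    nra.
Qed.
Lemma fstar : f ts = (2*r - A*exp(l1*ts))/M.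
Proof.
  pose proof BA. pose proof Mpos.
  assert (E : exp (l2*ts) = exp (l1*ts) * A / B).
  { replace (l1*ts) with (l2*ts + s*ts) by (unfold l1, l2; lra).
    rewrite exp_plus, exp_sts. field. lra. }
  unfold f. rewrite E. unfold M, l1, l2. field. repeat split; nra.
Qed.
Lemma rp : A*exp(l1*ts) = Rpower A (-l2/s) * Rpower B (l1/s).
Proof.
  pose proof BA. unfold Rpower, ts.
  rewrite ln_div by lra.
  rewrite <- (exp_ln A) at 1 by lra. rewrite <- exp_plus, <- exp_plus.
  f_equal. unfold l1, l2. field. lra.
Qed.
End Main.

Lemma keyG : (exists t, 0 < t /\ f t <= 0) <->
  (d < 0 /\ M - 2*r < l1*d /\ 2*r <= Rpower A (-l2/s) * Rpower B (l1/s)).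
Proof.
  pose proof Mpos. split.
  - intros [t [Ht Hf]].
    destruct (Classical_Prop.classic (d < 0 /\ 0 < A)) as [[Hd HA]|Hn].
    + split; [auto|split]. unfold A in HA; lra.
      rewrite <- rp by auto.
      pose proof (fmin Hd HA t). rewrite fstar in H0 by auto.
      assert ((2 * r - A * exp (l1 * ts)) / M <= 0) by lra.
      destruct (Rle_or_lt (2*r) (A * exp (l1*ts))); auto.
      assert (0 < (2 * r - A * exp (l1 * ts)) / M) by (apply Rdiv_lt_0_compat; lra). lra.
    + pose proof (lower1 t Ht Hn). lra.
  - intros [Hd [HA Hp]]. assert (HA' : 0 < A) by (unfold A; lra).
    exists ts. split. apply ts_pos; auto.
    rewrite fstar by auto. rewrite <- rp in Hp by auto.
    unfold Rdiv. assert (0 < / M) by (apply Rinv_0_lt_compat; lra). nra.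
Qed.
End G.

Lemma pointwise M0 r d : 0 < M0 -> 0 < 1 - 4*M0 -> 0 < r ->
  ((exists t, 0 < t /\ Dfun M0 r d t <= 0) <->
   (d < 0 /\ M0 - 2*r < lambda1 M0 * d /\
    2*r <= Rpower (lambda1 M0 * d - M0 + 2*r) (- lambda2 M0 / sqrt (Xi M0))
           * Rpower (lambda2 M0 * d - M0 + 2*r) (lambda1 M0 / sqrt (Xi M0)))).
Proof.
  intros HM HX Hr.
  assert (Hs0 : 0 < sqrt (Xi M0)) by (apply sqrt_lt_R0; unfold Xi; lra).
  assert (Hss : sqrt (Xi M0) * sqrt (Xi M0) = 1 - 4*M0) by (apply sqrt_sqrt; unfold Xi; lra).
  unfold lambda1, lambda2.
  set (s := sqrt (Xi M0)) in *.
  assert (Hs1 : s < 1) by nra.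
  assert (HMe : M0 = (1 - s*s)/4) by lra.
  assert (HD : forall t, Dfun M0 r d t = f s r d t).
  { intro t. unfold Dfun, Pfun, Qfun, lambda1, lambda2, f. fold s. rewrite HMe.
    field. repeat split; nra. }
  pose proof (keyG s r d Hs0 Hs1 Hr) as K.
  split.
  - intros [t [Ht H]]. rewrite HD in H. destruct (proj1 K (ex_intro _ t (conj Ht H))) as [a [b c]].
    rewrite HMe. auto.
  - intros [a [b c]]. rewrite HMe in b, c.
    destruct (proj2 K (conj a (conj b c))) as [t [Ht H]]. exists t. rewrite HD. auto.
Qed.

Theorem proposition3p1
  (a0 b0 : R) (rho0 u0 du0 : R -> R)
  (Hab : a0 < b0)
  (Hrho_cont : forall x, a0 <= x <= b0 -> continuity_pt rho0 x)
  (Hrho_pos : forall x, a0 < x < b0 -> 0 < rho0 x)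
  (Hu0_der : forall x, a0 < x < b0 -> derivable_pt_lim u0 x (du0 x))
  (pr : Riemann_integrable rho0 a0 b0)
  (HM0 : 0 < RiemannInt pr)
  (HXi : 0 < 1 - 4 * RiemannInt pr) :
  let M0 := RiemannInt pr in
  let l1 := lambda1 M0 in
  let l2 := lambda2 M0 in
  let sX := sqrt (Xi M0) in
  (exists t x, 0 < t /\ a0 < x < b0 /\ Dfun M0 (rho0 x) (du0 x) t <= 0)
  <->
  (exists x, a0 < x < b0 /\
     du0 x < 0 /\
     M0 - 2 * rho0 x < l1 * du0 x /\
     2 * rho0 x <=
       Rpower (l1 * du0 x - M0 + 2 * rho0 x) (- l2 / sX)
       * Rpower (l2 * du0 x - M0 + 2 * rho0 x) (l1 / sX)).
Proof.
  intros M0 l1 l2 sX. split.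
  - intros [t [x [Ht [Hx H]]]]. exists x. split; auto.
    apply (pointwise M0 (rho0 x) (du0 x) HM0 HXi (Hrho_pos x Hx)). eauto.
  - intros [x [Hx H]].
    destruct (proj2 (pointwise M0 (rho0 x) (du0 x) HM0 HXi (Hrho_pos x Hx)) H) as [t [Ht Ht']].
    exists t, x. auto.
Qed.
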